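(* Let $\mathbf{B}$ be a binomial ring and $n\ge0$. The pure mazes (those with all labels equal to $1$) form a basis of the category $\mathfrak{Laby}_n$; that is, for finite sets $X,Y$, the images of the pure mazes $X\to Y$ having at most $n$ passages form a basis of the $\mathbf{B}$-module $\mathfrak{Laby}_n(X,Y)$.
   Context: Binomial ring: commutative unital, torsion-free, with $\binom ak=a(a-1)\cdots(a-k+1)/k!\in\mathbf{B}$ for all $a\in\mathbf{B}$, $k\ge0$. A passage $p\colon x\to y$ carries label $\overline p\in\mathbf{B}$; a maze $P\colon X\to Y$ between finite sets is a finite multi-set of passages with every element of $X$ a source and every element of $Y$ a target; $|P|$ is the number of passages with multiplicity. $\mathfrak{Laby}$: objects formal finite direct sums of finite sets; $\mathfrak{Laby}(X,Y)$ generated by mazes modulo $P\cup\{x\xrightarrow0y\}=0$ and $P\cup\{x\xrightarrow{a+b}y\}=P\cup\{x\xrightarrow ay\}+P\cup\{x\xrightarrow by\}+P\cup\{x\xrightarrow ay,x\xrightarrow by\}$; composition $P\circ Q=\sum_{U\sqsubseteq P\boxtimes Q}U$ ($U$ a sub-multi-set of composable pairs using every passage occurrence of $P$ and $Q$, read as the maze with passages $x\xrightarrow{\overline p\overline q}z$). $\mathfrak{Laby}_n$ is the quotient of $\mathfrak{Laby}$ by (III) $P=0$ whenever $|P|>n$ and (IV) $P=\sum_d\prod_p\binom{\overline p}{d_p}I_d$, $d$ ranging over assignments $d_p\ge1$ to passage occurrences $p$ of $P$ and $I_d$ the maze with $d_p$ passages from the source to the target of $p$ labelled $1$. *)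

(* Defs.v *)
From mathcomp Require Import all_boot all_order all_algebra.
Set Implicit Arguments. Unset Strict Implicit. Unset Printing Implicit Defensive.
Import GRing.Theory.
Local Open Scope ring_scope.

Section Laby.
Variables (B : comPzRingType) (X Y : finType).

Definition passage := ((X * Y) * B)%type.
Definition src (p : passage) : X := p.1.1.
Definition tgt (p : passage) : Y := p.1.2.
Definition lab (p : passage) : B := p.2.

(* A maze X -> Y: a finite multiset of passages (a list, considered up to
   permutation via [delta] below) in which every x is a source and every
   y is a target. *)
Definition is_maze (P : seq passage) : bool :=
  [forall x : X, has (fun p => src p == x) P] &&
  [forall y : Y, has (fun p => tgt p == y) P].

Definition pure (P : seq passage) : bool := all (fun p => lab p == 1) P.

(* The free B-module on mazes is represented by B-valued functions on lists
   of passages; the basis vector of the maze (multiset) P is [delta P]. *)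
Definition delta (P : seq passage) : seq passage -> B :=
  fun N => (perm_eq P N)%:R.

(* I_d : d_p passages labelled 1 from the source to the target of each
   passage occurrence p of P (occurrences = positions in the list). *)
Definition Imaze (P : seq passage) (d : 'I_(size P) -> nat) : seq passage :=
  flatten [seq nseq (d i) ((tnth (in_tuple P) i).1, 1) | i <- enum 'I_(size P)].

Variables (bin : B -> nat -> B) (n : nat).

(* Generating relations (I), (II), (III), (IV) of Laby_n(X,Y).
   In (IV) the sum ranges over d with 1 <= d_p <= n; the omitted terms
   have |I_d| > n and vanish by (III). *)
Inductive laby_rel : (seq passage -> B) -> Prop :=
| relI (P : seq passage) (x : X) (y : Y) :
    is_maze (((x, y), 0) :: P) -> laby_rel (delta (((x, y), 0) :: P))
| relII (P : seq passage) (x : X) (y : Y) (a b : B) :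
    is_maze (((x, y), a) :: P) ->
    laby_rel (fun N => delta (((x, y), a + b) :: P) N
                       - delta (((x, y), a) :: P) N
                       - delta (((x, y), b) :: P) N
                       - delta (((x, y), a) :: ((x, y), b) :: P) N)
| relIII (P : seq passage) :
    is_maze P -> (n < size P)%N -> laby_rel (delta P)
| relIV (P : seq passage) :
    is_maze P ->
    laby_rel (fun N => delta P N -
      \sum_(f : {ffun 'I_(size P) -> 'I_n})
         (\prod_(i < size P) bin (lab (tnth (in_tuple P) i)) (f i).+1)
         * delta (Imaze (fun i => (f i).+1)) N).

(* The B-submodule spanned by the relations; Laby_n(X,Y) is the quotient of
   the free module on mazes X -> Y by it. *)
Inductive laby_span : (seq passage -> B) -> Prop :=
| span0 : laby_span (fun _ => 0)
| spanS (c : B) (g f : seq passage -> B) :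
    laby_rel g -> laby_span f -> laby_span (fun N => c * g N + f N)
| span_ext (f g : seq passage -> B) :
    (forall N, f N = g N) -> laby_span f -> laby_span g.

End Laby.

(* Main.v *)
From HB Require Import structures.
Require Import Defs.
From mathcomp Require Import all_boot all_order all_algebra.
From mathcomp Require Import ring mpoly.
Import GRing.Theory.
Local Open Scope ring_scope.
Section Span.
Variables (B : comPzRingType) (X Y : finType) (bin : B -> nat -> B) (n : nat).
Notation pas := (passage B X Y).
Notation span := (laby_span bin n).

Lemma span_extE {f g : seq pas -> B} : span f -> f =1 g -> span g.
Proof. by move=> s e; apply: span_ext s. Qed.

Lemma span_rel {g : seq pas -> B} : laby_rel bin n g -> span g.
Proof.
move=> r; apply: (span_extE (spanS 1 r (@span0 B X Y bin n))).
by move=> N; rewrite mul1r addr0.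
Qed.

Lemma span_add {f g : seq pas -> B} : span f -> span g -> span (fun N => f N + g N).
Proof.
move=> sf sg; elim: sf => [|c g' f' r _ IH|f1 f2 e _ IH].
- by apply: (span_extE sg) => N; rewrite add0r.
- by apply: (span_extE (spanS c r IH)) => N; rewrite addrA.
- by apply: (span_extE IH) => N; rewrite e.
Qed.

Lemma span_scale c {f : seq pas -> B} : span f -> span (fun N => c * f N).
Proof.
elim=> [|c' g' f' r _ IH|f1 f2 e _ IH].
- by apply: (span_extE (@span0 B X Y bin n)) => N; rewrite mulr0.
- by apply: (span_extE (spanS (c * c') r IH)) => N; rewrite mulrDr mulrA.
- by apply: (span_extE IH) => N; rewrite e.
Qed.

Lemma span_sum (T : eqType) (r : seq T) (F : T -> seq pas -> B) :
  (forall i, i \in r -> span (F i)) -> span (fun N => \sum_(i <- r) F i N).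
Proof.
elim: r => [_|i r IH H].
  by apply: (span_extE (@span0 B X Y bin n)) => N; rewrite big_nil.
have IH' : span (fun N => \sum_(j <- r) F j N).
  by apply: IH => j jr; apply: H; rewrite inE jr orbT.
apply: (span_extE (span_add (H i (mem_head _ _)) IH')) => N.
by rewrite big_cons.
Qed.

Section IM.
Variable P : seq pas.

Lemma Imaze_mem (d : 'I_(size P) -> nat) e :
  e \in Imaze d -> exists i, e = ((tnth (in_tuple P) i).1, 1).
Proof.
rewrite /Imaze => /flattenP [s /mapP [i _ ->]].
by rewrite mem_nseq => /andP [_ /eqP ->]; exists i.
Qed.

Lemma Imaze_mem_intro (d : 'I_(size P) -> nat) i :
  (0 < d i)%N -> ((tnth (in_tuple P) i).1, 1) \in Imaze d.
Proof.
move=> di; apply/flattenP; exists (nseq (d i) ((tnth (in_tuple P) i).1, 1)).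
  by apply/mapP; exists i; rewrite ?mem_enum.
by rewrite mem_nseq di eqxx.
Qed.

Lemma Imaze_pure (d : 'I_(size P) -> nat) : pure (Imaze d).
Proof. by apply/allP => e /Imaze_mem [i ->]. Qed.

Lemma Imaze_maze (d : 'I_(size P) -> nat) :
  is_maze P -> (forall i, 0 < d i)%N -> is_maze (Imaze d).
Proof.
move=> /andP [/forallP hx /forallP hy] dpos; apply/andP; split.
  apply/forallP => x; have /hasP [p pP /eqP px] := hx x.
  have /tnthP [i pi] : p \in in_tuple P by [].
  apply/hasP; exists ((tnth (in_tuple P) i).1, 1); first exact: Imaze_mem_intro.
  by rewrite /src /= -pi -px.
apply/forallP => y; have /hasP [p pP /eqP py] := hy y.
have /tnthP [i pi] : p \in in_tuple P by [].
apply/hasP; exists ((tnth (in_tuple P) i).1, 1); first exact: Imaze_mem_intro.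
by rewrite /tgt /= -pi -py.
Qed.
End IM.

Theorem spanning (P : seq pas) : is_maze P ->
  exists s : seq (B * seq pas),
    (forall q, q \in s -> [/\ is_maze q.2, pure q.2 & (size q.2 <= n)%N]) /\
    span (fun N => delta P N - \sum_(q <- s) q.1 * delta q.2 N).
Proof.
move=> mP.
pose c (f : {ffun 'I_(size P) -> 'I_n}) :=
  \prod_(i < size P) bin (lab (tnth (in_tuple P) i)) (f i).+1.
pose I (f : {ffun 'I_(size P) -> 'I_n}) := Imaze (fun i => (f i).+1).
pose cond f := (size (I f) <= n)%N.
exists [seq (c f, I f) | f <- [seq f <- index_enum {ffun 'I_(size P) -> 'I_n} | cond f]].
split.
  move=> q /mapP [f]; rewrite mem_filter => /andP [cf _] ->; split => //=.
    exact: Imaze_maze.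
  exact: Imaze_pure.
have r4 := span_rel (relIV bin n mP).
have r3 : span (fun N => \sum_(f <- [seq f <- index_enum {ffun 'I_(size P) -> 'I_n} | ~~ cond f])
                          c f * delta (I f) N).
  apply: span_sum => f.
  rewrite mem_filter => /andP [ncf _].
  apply: span_scale; apply: span_rel; apply: relIII.
    exact: Imaze_maze.
  by rewrite ltnNge.
apply: (span_extE (span_add r4 r3)) => N.
rewrite big_map big_filter big_filter (bigID cond) /=.
rewrite /I /c; ring.
Qed.
End Span.
Section NZ.
Variable B : comPzRingType.
Hypothesis h : (1 : B) != 0.
Definition nzB of (1 : B) != 0 : Type := B.
HB.instance Definition _ := GRing.ComPzRing.on (nzB h).
HB.instance Definition _ := GRing.PzSemiRing_isNonZero.Build (nzB h) h.
End NZ.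

Section Cancel.
Variables (B : comPzRingType) (X Y : finType).
Notation pas := (passage B X Y).

Lemma cancel_delta (Psi : seq pas -> B) :
  (forall P P', perm_eq P P' -> Psi P = Psi P') ->
  forall L : seq (B * seq pas),
  (forall N, \sum_(q <- L) q.1 * delta q.2 N = 0) ->
  \sum_(q <- L) q.1 * Psi q.2 = 0.
Proof.
move=> Hps L; have [k] := ubnP (size L); elim: k L => // k IH [|q0 L] sz H.
  by rewrite big_nil.
pose p := fun q : B * seq pas => perm_eq q0.2 q.2.
have dp : forall q N, p q -> delta q.2 N = delta q0.2 N.
  move=> q N pq; have /permPl e : perm_eq q.2 q0.2 by rewrite perm_sym.
  by rewrite /delta e.
have S0 : q0.1 + \sum_(q <- L | p q) q.1 = 0.
  have := H q0.2; rewrite big_cons /delta perm_refl mulr1.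
  rewrite (bigID p) /= [X in _ + (_ + X)]big1 ?addr0.
    congr (_ + _ = _); apply: eq_bigr => q pq.
    by rewrite (perm_sym q.2) (pq : perm_eq q0.2 q.2) mulr1.
  by move=> q /negbTE pq; rewrite (perm_sym q.2) (pq : perm_eq q0.2 q.2 = false) mulr0.
rewrite big_cons (bigID p) /= addrA.
have -> : \sum_(q <- L | p q) q.1 * Psi q.2 = \sum_(q <- L | p q) q.1 * Psi q0.2.
  by apply: eq_bigr => q pq; rewrite (Hps q.2 q0.2) // perm_sym.
rewrite -mulr_suml -mulrDl S0 mul0r add0r -big_filter.
apply: IH.
  by rewrite size_filter (leq_ltn_trans (count_size _ _)) // -ltnS.
move=> N; rewrite big_filter.
have := H N; rewrite big_cons (bigID p) /= addrA.
have -> : \sum_(q <- L | p q) q.1 * delta q.2 N = \sum_(q <- L | p q) q.1 * delta q0.2 N.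
  by apply: eq_bigr => q pq; rewrite dp.
by rewrite -mulr_suml -mulrDl S0 mul0r add0r.
Qed.
End Cancel.
Section Bin.
Variables (B : comPzRingType) (bin : B -> nat -> B).
Hypothesis torsion_free : forall (a : B) (k : nat), (0 < k)%N -> a *+ k = 0 -> a = 0.
Hypothesis bin_spec : forall (a : B) (k : nat), bin a k *+ k`! = \prod_(i < k) (a - i%:R).

Definition ff (a : B) k := \prod_(i < k) (a - i%:R).

Lemma ffS a k : ff a k.+1 = ff a k * (a - k%:R).
Proof. by rewrite /ff big_ord_recr. Qed.

Lemma bin_cancel (a b : B) k : a *+ k`! = b *+ k`! -> a = b.
Proof.
move=> e; apply/eqP; rewrite -subr_eq0; apply/eqP.
apply: (@torsion_free (a - b) k`! (fact_gt0 k)).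
by rewrite mulrnBl e subrr.
Qed.

Lemma bB0 a : bin a 0 = 1.
Proof. by have := bin_spec a 0; rewrite big_ord0 mulr1n. Qed.

Lemma bB0k k : bin 0 k.+1 = 0.
Proof.
apply: (@bin_cancel _ _ k.+1); rewrite bin_spec mul0rn big_ord_recl /=.
by rewrite subrr mul0r.
Qed.

Lemma bB11 : bin 1 1 = 1.
Proof. by have := bin_spec 1 1; rewrite big_ord1 subr0 /= mulr1n. Qed.

Lemma bB1k k : bin 1 k.+2 = 0.
Proof.
apply: (@bin_cancel _ _ k.+2); rewrite bin_spec mul0rn big_ord_recl big_ord_recl /=.
by rewrite subrr mul0r mulr0.
Qed.

Lemma ff0 a : ff a 0 = 1.
Proof. by rewrite /ff big_ord0. Qed.

Lemma ffD a b k :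
  ff (a + b) k = \sum_(i < k.+1) (ff a i * ff b (k - i)) *+ 'C(k, i).
Proof.
elim: k => [|k IH]; first by rewrite big_ord1 !ff0 mulr1.
have split_i : forall i : 'I_k.+1,
   (ff a i * ff b (k - i)) *+ 'C(k, i) * (a + b - k%:R) =
   (ff a i.+1 * ff b (k - i)) *+ 'C(k, i) + (ff a i * ff b (k.+1 - i)) *+ 'C(k, i).
  move=> i; have ik : (i <= k)%N by rewrite -ltnS.
  rewrite -mulrnDl mulrnAl; congr (_ *+ _).
  rewrite !ffS subSn // ffS natrB //; ring.
rewrite ffS IH mulr_suml (eq_bigr _ (fun i _ => split_i i)) big_split /=.
have -> : \sum_(i < k.+2) ff a i * ff b (k.+1 - i) *+ 'C(k.+1, i) =
   ff b k.+1 + (\sum_(i < k.+1) (ff a i.+1 * ff b (k - i)) *+ 'C(k, i)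
   + \sum_(i < k.+1) (ff a i.+1 * ff b (k - i)) *+ 'C(k, i.+1)).
  rewrite big_ord_recl /= subn0 bin0 mulr1n ff0 mul1r -big_split /=.
  by congr (_ + _); apply: eq_bigr => i _; rewrite /bump /= add1n subSS binS mulrnDr addrC.
rewrite addrCA; congr (_ + _).
rewrite big_ord_recl /= subn0 bin0 mulr1n ff0 mul1r.
congr (_ + _).
rewrite [in RHS]big_ord_recr /= bin_small // mulr0n addr0.
by apply: eq_bigr => i _; rewrite /bump /= subSS.
Qed.

Lemma vdm a b k : bin (a + b) k = \sum_(i < k.+1) bin a i * bin b (k - i).
Proof.
apply: (@bin_cancel _ _ k); rewrite bin_spec -/(ff _ _) ffD -sumrMnl.
apply: eq_bigr => i _; have ik : (i <= k)%N by rewrite -ltnS.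
rewrite -(bin_fact ik) [in RHS]mulnC mulrnA; congr (_ *+ _).
by rewrite mulrnA -mulrnAl -mulrnAr !bin_spec.
Qed.
End Bin.
Section Core.
Variables (B : comPzRingType) (h : (1 : B) != 0) (X Y : finType) (bin : B -> nat -> B) (n : nat).
Hypothesis torsion_free : forall (a : B) (k : nat), (0 < k)%N -> a *+ k = 0 -> a = 0.
Hypothesis bin_spec : forall (a : B) (k : nat), bin a k *+ k`! = \prod_(i < k) (a - i%:R).
Let b0k := @bB0k B bin torsion_free bin_spec.
Let b11 := @bB11 B bin bin_spec.
Let b1k := @bB1k B bin torsion_free bin_spec.
Let b0 := @bB0 B bin bin_spec.
Let vd := @vdm B bin torsion_free bin_spec.
Notation pas := (passage B X Y).
Notation R := (@nzB B h).
Notation K := #|{: (X * Y)%type}|.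
Notation MP := {mpoly R[K]}.

Definition idx (e : (X * Y)%type) : 'I_K := enum_rank e.
Definition tpoly (c : R) : {poly R} := \poly_(j < n.+1) (bin c j : R).
Definition ev (e : (X * Y)%type) (p : {poly R}) : MP :=
  (map_poly (@mpolyC K R) p).['X_(idx e)].
Definition Efac (p : pas) : MP :=
  \sum_(j < n) (bin (lab p) j.+1 : R) *: 'X_(idx p.1) ^+ j.+1.
Definition Phi (m : 'X_{1..K}) (P : seq pas) : R := (\prod_(p <- P) Efac p)@_m.

Lemma Efac0 (e : (X * Y)%type) : Efac (e, 0) = 0.
Proof.
by rewrite /Efac big1 // => j _; rewrite /lab /= b0k scale0r.
Qed.

Lemma Efac1 (e : (X * Y)%type) : (0 < n)%N -> Efac (e, 1) = 'X_(idx e).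
Proof.
rewrite /Efac; case: n => // k _; rewrite big_ord_recl /= b11 scale1r expr1.
by rewrite big1 ?addr0 // => j _; rewrite /lab /= b1k scale0r.
Qed.

Lemma EfacX (p : pas) :
  Efac p = 'X_(idx p.1) * \sum_(j < n) (bin (lab p) j.+1 : R) *: 'X_(idx p.1) ^+ j.
Proof. by rewrite /Efac mulr_sumr; apply: eq_bigr => j _; rewrite exprS scalerAr. Qed.

Lemma Efac_ev (p : pas) : Efac p = ev p.1 (tpoly (lab p) - 1).
Proof.
rewrite /ev (horner_coef_wide _ (n := n.+1)); last first.
  have inj : injective (fun c : R => c%:MP : MP).
    by move=> c1 c2 /eqP; rewrite mpolyC_eq => /eqP.
  rewrite (size_map_inj_poly inj (mpolyC0 _ _)).
  rewrite (leq_trans (size_polyD _ _)) // geq_max size_polyN size_poly.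
  by rewrite size_poly1.
rewrite big_ord_recl coef_map /= coefB coefC /tpoly coef_poly /=.
rewrite b0 subrr mpolyC0 mul0r add0r /Efac.
apply: eq_bigr => j _; rewrite coef_map /= coefB coefC coef_poly /bump /= add1n ltnS ltn_ord.
by rewrite subr0 mul_mpolyC.
Qed.

Lemma ev1 e : ev e 1 = 1.
Proof. by rewrite /ev rmorph1 hornerC. Qed.
Lemma evB e p q : ev e (p - q) = ev e p - ev e q.
Proof. by rewrite /ev rmorphB /= hornerD hornerN. Qed.
Lemma evM e p q : ev e (p * q) = ev e p * ev e q.
Proof. by rewrite /ev rmorphM /= hornerM. Qed.
Lemma evXn e k : ev e ('X^k) = 'X_(idx e) ^+ k.
Proof. by rewrite /ev rmorphXn /= map_polyX hornerXn. Qed.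

Lemma low0 (p : {poly R}) k : (forall i, (i < k)%N -> p`_i = 0) ->
  p = 'X^k * \poly_(i < size p) p`_(i + k).
Proof.
move=> H; apply/polyP => i; rewrite coefXnM.
case: ltnP => [/H //|ki]; rewrite coef_poly subnK //.
case: ltnP => // sp; rewrite nth_default //.
by rewrite (leq_trans sp) // leq_subr.
Qed.

Lemma tpoly_vdm (a b : B) :
  tpoly (a + b) - tpoly a * tpoly b =
  'X^(n.+1) * \poly_(i < size (tpoly (a + b) - tpoly a * tpoly b))
     (tpoly (a + b) - tpoly a * tpoly b)`_(i + n.+1).
Proof.
apply: low0 => i iN; rewrite coefB coefM /tpoly coef_poly iN vd.
apply/eqP; rewrite subr_eq0; apply/eqP; apply: eq_bigr => j _.
have ji : (j <= i)%N by rewrite -ltnS.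
rewrite !coef_poly (leq_ltn_trans ji iN) (leq_ltn_trans (leq_subr _ _) iN) //.
Qed.

Lemma mdeg_coef0 (u m : 'X_{1..K}) (G : MP) :
  (mdeg m < mdeg u)%N -> ('X_[u] * G)@_m = 0.
Proof.
move=> lt; rewrite mcoeffM big1 // => k /eqP mk.
rewrite mcoeffX; case: eqP => [uk|]; last by rewrite mul0r.
have : (mdeg u <= mdeg m)%N by rewrite (congr1 mdeg mk) mdegD -uk leq_addr.
by rewrite leqNgt lt.
Qed.

Lemma Efac_II (e : (X * Y)%type) (a b : B) :
  Efac (e, a + b) - Efac (e, a) - Efac (e, b) - Efac (e, a) * Efac (e, b) =
  'X_[U_(idx e) *+ n.+1] * ev e (\poly_(i < size (tpoly (a + b) - tpoly a * tpoly b))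
     (tpoly (a + b) - tpoly a * tpoly b)`_(i + n.+1)).
Proof.
rewrite !Efac_ev /= -mpolyXn -evXn -[in RHS]evM -tpoly_vdm.
have E : forall p q r : {poly R}, ev e (p - 1) - ev e (q - 1) - ev e (r - 1)
   - ev e (q - 1) * ev e (r - 1) = ev e (p - q * r).
  move=> p q r; rewrite (evB e p 1) (evB e q 1) (evB e r 1) (evB e p) (evM e q r) ev1; ring.
exact: E.
Qed.

Lemma Phi_perm m (P P' : seq pas) : perm_eq P P' -> Phi m P = Phi m P'.
Proof. by move=> pp; rewrite /Phi (perm_big _ pp). Qed.

Lemma Phi_I m x y (P : seq pas) : Phi m (((x, y), 0) :: P) = 0.
Proof. by rewrite /Phi big_cons Efac0 mul0r mcoeff0. Qed.

Lemma Phi_II m x y (a b : B) (P : seq pas) : (mdeg m <= n)%N ->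
  Phi m (((x, y), a + b) :: P) - Phi m (((x, y), a) :: P) - Phi m (((x, y), b) :: P)
  - Phi m (((x, y), a) :: ((x, y), b) :: P) = 0.
Proof.
move=> dm; rewrite /Phi !big_cons -!mcoeffB.
set G := \prod_(p <- P) Efac p.
have -> : Efac (x, y, a + b) * G - Efac (x, y, a) * G - Efac (x, y, b) * G -
    Efac (x, y, a) * (Efac (x, y, b) * G) =
   (Efac (x, y, a + b) - Efac (x, y, a) - Efac (x, y, b) - Efac (x, y, a) * Efac (x, y, b)) * G.
  by ring.
rewrite Efac_II -mulrA mdeg_coef0 // mdegMn mdeg1 mul1n ltnS //.
Qed.

Definition mono (r : seq pas) : 'X_{1..K} := (\sum_(p <- r) U_(idx p.1))%MM.

Lemma prodX (r : seq pas) : \prod_(p <- r) 'X_(idx p.1) = 'X_[mono r] :> MP.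
Proof.
rewrite /mono; elim: r => [|p r IH]; first by rewrite !big_nil mpolyX0.
by rewrite !big_cons IH mpolyXD.
Qed.

Lemma mdeg_mono r : mdeg (mono r) = size r.
Proof.
rewrite /mono mdeg_sum (eq_bigr (fun _ => 1%N)) => [|p _]; last exact: mdeg1.
by rewrite sum1_size.
Qed.

Lemma Phi_III m (P : seq pas) : (mdeg m <= n)%N -> (n < size P)%N -> Phi m P = 0.
Proof.
move=> dm sP; rewrite /Phi (eq_bigr _ (fun p _ => EfacX p)) big_split /=.
by rewrite prodX mdeg_coef0 // mdeg_mono (leq_ltn_trans dm).
Qed.

Lemma prod_Imaze (P : seq pas) (d : 'I_(size P) -> nat) (F : pas -> MP) :
  \prod_(p <- Imaze d) F p = \prod_(i < size P) F ((tnth (in_tuple P) i).1, 1) ^+ d i.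
Proof.
rewrite /Imaze big_flatten big_map /= big_enum /=.
by apply: eq_bigr => i _; rewrite big_nseq iter_mulr_1.
Qed.

Lemma Phi_IV m (P : seq pas) :
  Phi m P = \sum_(f : {ffun 'I_(size P) -> 'I_n})
    (\prod_(i < size P) (bin (lab (tnth (in_tuple P) i)) (f i).+1 : R))
      * Phi m (Imaze (fun i => (f i).+1)).
Proof.
rewrite /Phi big_tnth /Efac bigA_distr_bigA /=.
rewrite (big_morph (mcoeff m) (@mcoeffD _ R m) (@mcoeff0 _ R m)).
apply: eq_bigr => f _; rewrite scaler_prod mcoeffZ prod_Imaze; congr (_ * _@__).
apply: eq_bigr => i _; rewrite -/(Efac ((tnth (in_tuple P) i).1, 1)) Efac1 //.
by case: (f i) => j /=; case: (n).
Qed.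

Lemma Phi_pure m (r : seq pas) : pure r -> (size r <= n)%N -> Phi m r = (mono r == m)%:R.
Proof.
move=> /allP pr sr; rewrite /Phi -mcoeffX -prodX.
congr (_@__); apply: eq_big_seq => p pin.
have /eqP lp := pr p pin; case: p lp pin => e a /= -> pin.
rewrite Efac1 //; apply: leq_trans sr; case: (r) pin => //.
Qed.

Lemma Phi_pureB m (r : seq pas) : pure r -> (size r <= n)%N ->
  Phi m r = (mono r == m)%:R :> B.
Proof. exact: Phi_pure. Qed.

Definition good (f : seq pas -> B) := exists L : seq (B * seq pas),
  (forall N, f N = \sum_(q <- L) q.1 * delta q.2 N) /\
  (forall m : 'X_{1..K}, (mdeg m <= n)%N -> \sum_(q <- L) q.1 * Phi m q.2 = 0).

Lemma good_rel (g : seq pas -> B) : laby_rel bin n g -> good g.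
Proof.
case=> [P x y _|P x y a b _|P _ sP|P _].
- exists [:: (1, ((x, y), 0) :: P)]; split => [N|m _].
    by rewrite big_cons big_nil mul1r addr0.
  by rewrite big_cons big_nil /= mul1r addr0 Phi_I.
- exists [:: (1, ((x, y), a + b) :: P); (-1, ((x, y), a) :: P); (-1, ((x, y), b) :: P);
             (-1, ((x, y), a) :: ((x, y), b) :: P)]; split => [N|m dm].
    by rewrite !big_cons big_nil /=; ring.
  have E : Phi m (((x, y), a + b) :: P) - Phi m (((x, y), a) :: P)
     - Phi m (((x, y), b) :: P) - Phi m (((x, y), a) :: ((x, y), b) :: P) = 0 :> B.
    exact: Phi_II.
  by rewrite !big_cons big_nil /= addr0 -[RHS]E; ring.
- exists [:: (1, P)]; split => [N|m dm].
    by rewrite big_cons big_nil mul1r addr0.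
  have E : Phi m P = 0 :> B by exact: Phi_III.
  by rewrite big_cons big_nil /= E mulr0 addr0.
- exists ((1, P) :: [seq (- \prod_(i < size P) bin (lab (tnth (in_tuple P) i)) (f i).+1,
      Imaze (fun i => (f i).+1)) | f : {ffun 'I_(size P) -> 'I_n} <- index_enum {ffun 'I_(size P) -> 'I_n}]).
  split => [N|m dm].
    rewrite big_cons big_map /= mul1r; congr (_ + _).
    by rewrite -sumrN; apply: eq_bigr => f _; rewrite mulNr.
  have E : Phi m P = \sum_(f : {ffun 'I_(size P) -> 'I_n})
    (\prod_(i < size P) bin (lab (tnth (in_tuple P) i)) (f i).+1)
      * Phi m (Imaze (fun i => (f i).+1)) :> B.
    exact: Phi_IV.
  rewrite big_cons big_map /= mul1r E -big_split /=.
  by rewrite big1 // => f _; rewrite mulNr subrr.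
Qed.

Lemma good_span (f : seq pas -> B) : laby_span bin n f -> good f.
Proof.
elim=> [|c g f' r _ [L [fL PL]]|f1 f2 e _ [L [fL PL]]].
- by exists [::]; split => [N|m _]; rewrite big_nil.
- have [L1 [gL PL1]] := @good_rel g r.
  exists ([seq (c * q.1, q.2) | q <- L1] ++ L); split => [N|m dm].
    by rewrite big_cat big_map /= fL gL mulr_sumr; congr (_ + _); apply: eq_bigr => q _; rewrite mulrA.
  rewrite big_cat big_map /= PL // addr0.
  have := PL1 m dm => E; rewrite (eq_bigr (fun q => c * (q.1 * Phi m q.2))).
    by rewrite -mulr_sumr E mulr0.
  by move=> q _; rewrite mulrA.
- by exists L; split => // N; rewrite -e.
Qed.

Lemma mono_perm (r1 r2 : seq pas) : pure r1 -> pure r2 -> mono r1 = mono r2 -> perm_eq r1 r2.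
Proof.
move=> /allP p1 /allP p2 e.
have cnt : forall r : seq pas, pure r -> forall x : pas, lab x = 1 ->
    count_mem x r = mono r (idx x.1).
  move=> r /allP pr x lx; rewrite /mono mnm_sumE -sum1_count big_mkcond /=.
  apply: eq_big_seq => p pin; rewrite mnm1E (inj_eq enum_rank_inj).
  have /eqP lp := pr p pin; case: p lp pin => e1 a1 /= -> _.
  by case: x lx => e2 a2 /= ->; rewrite xpair_eqE eqxx andbT.
apply/allP => x xin; apply/eqP.
have lx : lab x = 1.
  by move: xin; rewrite mem_cat => /orP [/p1|/p2] /eqP.
by rewrite !cnt // ?e //; apply/allP.
Qed.

Lemma sum_pick (s : seq (B * seq pas)) q0 :
  (forall q, q \in s -> pure q.2) ->
  pairwise (fun q r : B * seq pas => ~~ perm_eq q.2 r.2) s -> q0 \in s ->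
  \sum_(q <- s) q.1 * (mono q.2 == mono q0.2)%:R = q0.1 :> B.
Proof.
elim: s => // r s IH Hp /= /andP [/allP ar pw]; rewrite inE big_cons.
have Hr := Hp r (mem_head _ _).
have Hq : forall q, q \in s -> pure q.2 by move=> q qs; apply: Hp; rewrite inE qs orbT.
have nz : forall q, q \in s -> ~~ perm_eq r.2 q.2 -> q.1 * (mono q.2 == mono r.2)%:R = 0 :> B.
  move=> q qs np; case: eqP => [e|]; last by rewrite mulr0.
  by move: np; rewrite (mono_perm _ _ Hr (Hq q qs)) // e.
case/orP => [/eqP ->|q0s].
  by rewrite eqxx mulr1 big1_seq ?addr0 // => q /andP [_ qs]; apply: nz => //; apply: ar.
rewrite IH //.
case: eqP => [e|]; last by rewrite mulr0 add0r.
have := ar q0 q0s; rewrite (mono_perm _ _ Hr (Hq q0 q0s)) //.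
Qed.

Theorem indep (s : seq (B * seq pas)) :
  (forall q, q \in s -> [/\ is_maze q.2, pure q.2 & (size q.2 <= n)%N]) ->
  pairwise (fun q r : B * seq pas => ~~ perm_eq q.2 r.2) s ->
  laby_span bin n (fun N => \sum_(q <- s) q.1 * delta q.2 N) ->
  forall q, q \in s -> q.1 = 0.
Proof.
move=> Hs pw sp q0 q0s; have [L [fL PL]] := good_span _ sp.
pose m := mono q0.2.
have dm : (mdeg m <= n)%N by rewrite mdeg_mono; case: (Hs _ q0s).
have C := @cancel_delta B X Y (fun P => Phi m P) (@Phi_perm m)
  (s ++ [seq (- q.1, q.2) | q <- L]).
have S1 : \sum_(q <- L) - q.1 * Phi m q.2 = 0.
  by rewrite (eq_bigr (fun q => - (q.1 * Phi m q.2))) => [|q _]; rewrite ?mulNr // sumrN PL // oppr0.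
have {C} C : \sum_(q <- s) q.1 * Phi m q.2 = 0.
  move: C; rewrite big_cat big_map /= S1 addr0; apply => N.
  have S2 : \sum_(q <- L) - q.1 * delta q.2 N = - \sum_(q <- L) q.1 * delta q.2 N.
    by rewrite -sumrN; apply: eq_bigr => q _; rewrite mulNr.
  by rewrite big_cat big_map /= S2 -fL subrr.
rewrite -(@sum_pick s q0 _ pw q0s); last by move=> q /Hs [].
rewrite -[RHS]C; apply: eq_big_seq => q qs; rewrite Phi_pureB //; by case: (Hs q qs).
Qed.
End Core.

Theorem mainTheorem12 (B : comPzRingType) (bin : B -> nat -> B)
  (torsion_free : forall (a : B) (k : nat), (0 < k)%N -> a *+ k = 0 -> a = 0)
  (bin_spec : forall (a : B) (k : nat),
      bin a k *+ k`! = \prod_(i < k) (a - i%:R))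
  (n : nat) (X Y : finType) :
  (* spanning: every maze is congruent to a combination of pure mazes
     with at most n passages *)
  (forall P : seq (passage B X Y), is_maze P ->
     exists s : seq (B * seq (passage B X Y)),
       (forall q, q \in s -> [/\ is_maze q.2, pure q.2 & (size q.2 <= n)%N]) /\
       laby_span bin n (fun N => delta P N - \sum_(q <- s) q.1 * delta q.2 N))
  /\
  (* linear independence of the pure mazes with at most n passages *)
  (forall s : seq (B * seq (passage B X Y)),
     (forall q, q \in s -> [/\ is_maze q.2, pure q.2 & (size q.2 <= n)%N]) ->
     pairwise (fun q r : B * seq (passage B X Y) => ~~ perm_eq q.2 r.2) s ->
     laby_span bin n (fun N => \sum_(q <- s) q.1 * delta q.2 N) ->
     forall q, q \in s -> q.1 = 0).
Proof.
split; first by move=> P mP; exact: spanning.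
have [h1|h1] := eqVneq (1 : B) 0.
  by move=> s _ _ _ q _; rewrite -[q.1]mulr1 h1 mulr0.
exact: (@indep B h1 X Y bin n torsion_free bin_spec).
Qed.
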